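(* Consider an unweighted ESP instance on $G=(V,E)$, $|V|=n$, root $r$, and let $L^*$ be the minimum total latency of a feasible expanding search pattern. For each $k\in\{1,\dots,n\}$ let $T_k$ be the tree returned by Garg's 2-approximation algorithm for the rooted $k$-MST problem (a subtree of $G$ containing $r$ with exactly $k$ vertices whose length $\ell(T_k)=\sum_{e\in E(T_k)}\ell_e$ is at most twice the minimum length of such a tree), where $T_1=(\{r\},\emptyset)$. Let $H$ be the directed graph with vertex set $\{1,\dots,n\}$, arcs $(i,j)$ for all $i<j$, and arc costs $c_{i,j}=(n-i)\,\ell(T_j)$. Then a shortest $(1,n)$-path in $H$ has cost at most $2eL^*$.
   Context: Unweighted ESP: connected undirected graph $G=(V,E)$, root $r\in V$, edge lengths $\ell_e\in\mathbb{Z}_{>0}$, all vertex weights $w_v=1$. An expanding search pattern is a sequence of edges $\sigma=(e_1,\dots,e_m)$ with $r\in e_1$ such that $\{e_1,\dots,e_i\}$ forms a tree in $G$ for every $i$; it is feasible if it visits every vertex. For $v\ne r$, $k_v=\min\{i:v\in e_i\}$, $k_r=0$, latency $L_v(\sigma)=\sum_{i=1}^{k_v}\ell_{e_i}$; total latency $L(\sigma)=\sum_{v\in V}L_v(\sigma)$. The cost of a path in $H$ is the sum of its arc costs. *)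

(* Defs.v *)
From HB Require Import structures.
From mathcomp Require Import all_boot all_order all_algebra.
From mathcomp Require Import reals.
From mathcomp Require Import sequences.
Set Implicit Arguments. Unset Strict Implicit. Unset Printing Implicit Defensive.

Section ESP.
Variables (V E : finType) (ends : E -> V * V) (len : E -> nat) (r : V).

Definition inc (e : E) (v : V) : bool := (v == (ends e).1) || (v == (ends e).2).

Definition simple_graph : Prop :=
  (forall e, (ends e).1 != (ends e).2) /\
  (forall e f, inc e =1 inc f -> e = f).
Definition adj_in (F : {set E}) : rel V :=
  fun x y => [exists e in F, inc e x && inc e y && (x != y)].
Definition connected_graph : Prop := forall v, connect (adj_in setT) r v.

Definition rverts (F : {set E}) : {set V} := r |: [set v | [exists e in F, inc e v]].

Definition rooted_tree (F : {set E}) : Prop :=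
  (forall v, v \in rverts F -> connect (adj_in F) r v) /\
  #|rverts F| = (#|F| + 1)%N.

Definition lenT (F : {set E}) : nat := \sum_(e in F) len e.

Definition prefix_set (s : seq E) (i : nat) : {set E} := [set e in take i s].
Definition expanding (s : seq E) : Prop :=
  (match s with [::] => True | e1 :: _ => inc e1 r end) /\
  forall i, (1 <= i <= size s)%N -> rooted_tree (prefix_set s i).
Definition feasible (s : seq E) : Prop :=
  expanding s /\ forall v, v != r -> has (inc^~ v) s.

(* latency: k_v = first (1-based) index i with v in e_i; k_r = 0 *)
Definition latency (s : seq E) (v : V) : nat :=
  if v == r then 0%N else \sum_(e <- take (find (inc^~ v) s).+1 s) len e.
Definition total_latency (s : seq E) : nat := \sum_(v : V) latency s v.

Definition kmst_2approx (T : nat -> {set E}) : Prop :=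
  T 1%N = set0 /\
  forall k, (1 <= k <= #|V|)%N ->
    [/\ rooted_tree (T k), #|rverts (T k)| = k &
        forall F, rooted_tree F -> #|rverts F| = k -> (lenT (T k) <= 2 * lenT F)%N].

(* Paths in H from 1 to n: vertex sequence 1 :: P, strictly increasing, ending in n.
   Cost of arc (i,j) is (n - i) * len(T_j). *)
Definition H_path (n : nat) (P : seq nat) : bool := path ltn 1%N P && (last 1%N P == n).
Definition H_cost (n : nat) (T : nat -> {set E}) (P : seq nat) : nat :=
  \sum_(ij <- zip (1%N :: P) P) ((n - ij.1) * lenT (T ij.2))%N.
End ESP.

(* Main.v *)
Require Import Defs.
From HB Require Import structures.
From mathcomp Require Import all_boot all_order all_algebra.
From mathcomp Require Import reals.
From mathcomp Require Import sequences.
From mathcomp Require Import exp.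
From mathcomp Require Import lra zify ring.
Import Order.TTheory GRing.Theory Num.Theory.
From mathcomp Require Import boolp.
Local Open Scope ring_scope.
Section Pure.
Variable R : realType.
Local Notation e := (expR (1:R)).

Lemma e_gt1 : 1 < e. Proof. by rewrite expR_gt1. Qed.

Lemma nat_min_exists (N : nat) (F : nat -> R) : (0 < N)%N ->
  exists2 s, (s < N)%N & forall k, (k < N)%N -> F s <= F k.
Proof.
elim: N => // [[|N]] IH _.
  by exists 0%N => // k; rewrite ltnS leqn0 => /eqP ->.
have [s sN Hs] := IH isT.
have [le|lt] := leP (F s) (F N.+1).
  exists s; first by apply: ltnW.
  move=> k; rewrite ltnS leq_eqVlt => /orP[/eqP->//|]; exact: Hs.
exists N.+1 => // k; rewrite ltnS leq_eqVlt => /orP[/eqP->//|kN].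
by apply: le_trans (ltW lt) (Hs k kN).
Qed.

Lemma prod_le_exp (N : nat) (x : nat -> R) :
  (forall s, (s < N)%N -> 0 <= x s) ->
  \prod_(0 <= s < N) (1 + x s) <= expR (\sum_(0 <= s < N) x s).
Proof.
elim: N => [|N IH] H; first by rewrite !big_geq // expR0.
rewrite !big_nat_recr //= expRD.
apply: ler_pM.
- rewrite big_seq; apply: prodr_ge0 => i; rewrite mem_index_iota => /andP[_ iN].
  have := H i (ltnW iN). lra.
- have := H N (ltnSn N); lra.
- by apply: IH => s sN; apply: H; apply: ltnW.
- exact: expR_ge1Dx.
Qed.

Lemma per_k_sum (N k : nat) (p : nat -> R) : (k <= N)%N -> p N = e * p 0%N ->
  \sum_(0 <= s < N) (p s.+1 - p s) * (if (k <= s)%N then 1 else e) = (e - 1) * p k.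
Proof.
move=> kN pN.
rewrite (@big_cat_nat _ _ _ k) /= ?leq0n //.
rewrite (eq_big_nat _ _ (F2 := fun s => e * (p s.+1 - p s))); last first.
  by move=> i /andP[_ ik]; rewrite leqNgt ik /= mulrC.
rewrite (eq_big_nat _ _ (F1 := fun s => (p s.+1 - p s) * (if (k <= s)%N then 1 else e)) (F2 := fun s => (p s.+1 - p s))); last first.
  by move=> i /andP[ki _]; rewrite ki mulr1.
rewrite -mulr_sumr !telescope_sumr // pN. lra.
Qed.

Lemma avg_pure (N : nat) (p A : nat -> R) : (0 < N)%N -> 0 < p 0%N ->
  (forall s, (s < N)%N -> p s <= p s.+1) -> p N = e * p 0%N ->
  (forall s, 0 <= A s) ->
  exists2 s, (s < N)%N &
    p s * (\sum_(0 <= k < N) A k * (if (k <= s)%N then 1 else e))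
      <= (e - 1) * \sum_(0 <= k < N) A k * p k.
Proof.
move=> N0 p0 pmon pN A0.
have ppos : forall s, (s <= N)%N -> 0 < p s.
  elim=> // s IH sN; apply: lt_le_trans (IH (ltnW sN)) (pmon s sN).
set H := fun s => \sum_(0 <= k < N) A k * (if (k <= s)%N then 1 else e).
have Hge0 : forall s, 0 <= H s.
  move=> s; apply: sumr_ge0 => k _; apply: mulr_ge0 => //.
  case: ifP => _ //; have := e_gt1; lra.
have ident : \sum_(0 <= s < N) (p s.+1 - p s) * H s = (e - 1) * \sum_(0 <= k < N) A k * p k.
  rewrite /H.
  under eq_bigr do rewrite mulr_sumr.
  rewrite exchange_big /= mulr_sumr.
  apply: eq_big_nat => k /andP[_ kN].
  under eq_bigr do rewrite mulrCA.
  rewrite -mulr_sumr per_k_sum //; last exact: ltnW.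
  by rewrite mulrCA.
have [s sN Hs] := @nat_min_exists N (fun s => p s * H s) N0.
exists s => //.
rewrite -ident.
have sum1 : 1 <= \sum_(0 <= s < N) (p s.+1 - p s) / p s.
  have : expR 1 <= expR (\sum_(0 <= s < N) (p s.+1 - p s) / p s).
    have hp := @prod_le_exp N (fun s => (p s.+1 - p s) / p s).
    apply: le_trans (hp _); last first.
      move=> i iN; apply: divr_ge0; first by have := pmon i iN; lra.
      by apply: ltW; apply: ppos; apply: ltnW.
    rewrite (eq_big_nat _ _ (F2 := fun s => p s.+1 / p s)); last first.
      move=> i /andP[_ iN]; have := ppos i (ltnW iN) => pi.
      by rewrite mulrBl divff ?gt_eqF // addrC subrK.
    rewrite telescope_prodf //; last first.
      by move=> k /andP[_ kN]; rewrite gt_eqF // ppos // ltnW.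
    by rewrite pN mulfK // gt_eqF.
  by rewrite ler_expR.
apply: le_trans (_ : p s * H s * \sum_(0 <= s < N) (p s.+1 - p s) / p s <= _).
  rewrite -[X in X <= _]mulr1; change (p s * H s * 1 <= p s * H s * \sum_(0 <= s < N) (p s.+1 - p s) / p s); apply: ler_wpM2l => //.
  by apply: mulr_ge0; [apply: ltW; apply: ppos; apply: ltnW|].
rewrite mulr_sumr; apply: ler_sum_nat => i /andP[_ iN].
have pi := ppos i (ltnW iN).
have -> : (p i.+1 - p i) * H i = (p i.+1 - p i) / p i * (p i * H i).
  by rewrite mulrA divfK // gt_eqF.
rewrite [X in X <= _]mulrC; apply: ler_wpM2l; first by apply: divr_ge0; [have := pmon i iN; lra| apply: ltW].
exact: Hs.
Qed.
End Pure.
Section PathInd.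
Variable R : realType.
Local Notation e := (expR (1:R)).

Definition pcost (n : nat) (a : nat -> R) (i : nat) (P : seq nat) : R :=
  \sum_(ij <- zip (i :: P) P) (n - ij.1)%:R * a ij.2.

Lemma pcost_cons n a i j P : pcost n a i (j :: P) = (n - i)%:R * a j + pcost n a j P.
Proof. by rewrite /pcost /= big_cons. Qed.

Lemma key_ineq (aj T th : R) : aj <= T -> e * th <= T ->
  aj <= e / (e - 1) * (T - th).
Proof.
move=> h1 h2; have eg := e_gt1 R.
rewrite mulrAC ler_pdivlMr; last lra.
apply: le_trans (_ : T * (e - 1) <= _).
  by apply: ler_wpM2r; lra.
nra.
Qed.

Lemma path_ind (n : nat) (a t : nat -> R) :
  (forall k, (1 < k <= n)%N -> a k <= t k) ->
  (forall k l, (1 < k)%N -> (k <= l <= n)%N -> t k <= t l) ->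
  (forall k l, (1 < k <= n)%N -> (1 < l <= n)%N -> t k < t l -> e * t k <= t l) ->
  forall i, (1 <= i <= n)%N -> forall th, 0 <= th ->
  (forall k, (i < k <= n)%N -> e * th <= t k) ->
  exists P, [/\ path ltn i P, last i P = n &
    pcost n a i P <= e / (e - 1) * \sum_(i.+1 <= k < n.+1) (t k - th)].
Proof.
move=> hat hmon hgap.
have eg := e_gt1 R.
suff: forall d i, (n - i <= d)%N -> (1 <= i <= n)%N -> forall th, 0 <= th ->
  (forall k, (i < k <= n)%N -> e * th <= t k) ->
  exists P, [/\ path ltn i P, last i P = n &
    pcost n a i P <= e / (e - 1) * \sum_(i.+1 <= k < n.+1) (t k - th)].
  by move=> H i hi; apply: (H (n - i)%N).
elim=> [|d IH] i hd /andP[i1 iN] th th0 hth.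
  have -> : i = n by apply/eqP; rewrite eqn_leq iN /= -subn_eq0 -leqn0.
  exists [::]; split => //.
  by rewrite /pcost /= big_nil big_geq // mulr0.
have [->|ilt] := eqVneq i n.
  exists [::]; split => //.
  by rewrite /pcost /= big_nil big_geq // mulr0.
have ilt' : (i < n)%N by rewrite ltn_neqAle ilt iN.
pose Pj := fun k => (k <= n)%N && (t k <= t i.+1).
have exP : exists k, Pj k by exists i.+1; rewrite /Pj ilt' lexx.
have ubP : forall k, Pj k -> (k <= n)%N by move=> k /andP[].
case: (ex_maxnP exP ubP) => j /andP[jn tj] jmax.
have ij : (i < j)%N by apply: jmax; rewrite /Pj ilt' lexx.
set T := t i.+1.
have T0 : 0 <= T.
  have := hth i.+1; rewrite ltnSn ilt' => /(_ isT) h.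
  have h0 : 0 <= e * th by apply: mulr_ge0 => //; lra.
  exact: le_trans h0 h.
have hmid : forall k, (i < k <= j)%N -> t k = T.
  move=> k /andP[ik kj]; apply/eqP; rewrite eq_le; apply/andP; split.
    by apply: le_trans (hmon k j _ _) tj; [lia|rewrite kj jn].
  by apply: hmon; [lia|rewrite ik /=; lia].
have hhi : forall k, (j < k <= n)%N -> e * T <= t k.
  move=> k /andP[jk kn]; apply: hgap; [lia|lia|].
  rewrite ltNge; apply/negP => hk.
  have := jmax k; rewrite /Pj kn hk => /(_ isT); lia.
have [P' [pP' lP' cP']] := IH j ltac:(lia) ltac:(lia) T T0 hhi.
exists (j :: P'); split => //=; first by rewrite ij.
rewrite pcost_cons.
rewrite (@big_cat_nat _ _ _ j.+1) /=; [|lia|lia].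
rewrite (eq_big_nat _ _ (F2 := fun _ => T - th)); last first.
  by move=> k hk; rewrite hmid //; lia.
rewrite sumr_const_nat.
rewrite (eq_bigr (fun k => (t k - T) + (T - th))); last by move=> k _; rewrite addrA subrK.
rewrite big_split /= sumr_const_nat.
have h1 : (n - i)%:R * a j <= (n - i)%:R * (e / (e - 1) * (T - th)).
  apply: ler_wpM2l => //; apply: key_ineq.
    apply: le_trans (hat j _) tj; lia.
  by have := hth i.+1; rewrite ltnSn ilt' => /(_ isT).
apply: le_trans (lerD h1 cP') _.
have -> : (n - i)%N = ((j.+1 - i.+1) + (n.+1 - j.+1))%N by lia.
rewrite natrD.
move: (j.+1 - i.+1)%N (n.+1 - j.+1)%N (expR 1 / (expR 1 - 1)) (\sum_(j.+1 <= k < n.+1) (t k - T)) => x y c S.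
rewrite le_eqVlt; apply/orP; left; apply/eqP; ring.
Qed.
End PathInd.
Arguments pcost {R}.
Section Thresh.
Variable R : realType.
Local Notation e := (expR (1:R)).

Definition tau (y x : R) : R :=
  if 0 < x then y * expR ((Num.ceil (ln (x / y)))%:~R) else 0.

Lemma tau_ge0 y x : 0 < y -> 0 <= tau y x.
Proof.
by move=> y0; rewrite /tau; case: ifP => // _; apply: mulr_ge0; [apply: ltW|apply: expR_ge0].
Qed.

Lemma tau_ge y x : 0 < y -> 0 <= x -> x <= tau y x.
Proof.
move=> y0 x0; rewrite /tau; case: ifPn => [xp|]; last by rewrite lt_def negb_and negbK x0 orbF => /eqP->.
rewrite mulrC -ler_pdivrMr //.
have xy : 0 < x / y by apply: divr_gt0.
rewrite -{1}(lnK xy) ?posrE // ler_expR.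
exact: ceil_ge.
Qed.

Lemma tau_min y x (w : int) : 0 < y -> 0 < x -> x <= y * expR w%:~R ->
  tau y x <= y * expR w%:~R.
Proof.
move=> y0 xp h; rewrite /tau xp; apply: ler_wpM2l; first exact: ltW.
rewrite ler_expR ler_int ceil_le_int.
have xy : 0 < x / y by apply: divr_gt0.
by rewrite -ler_expR lnK ?posrE // ler_pdivrMr // mulrC.
Qed.

Lemma tau_mono y x x' : 0 < y -> x <= x' -> tau y x <= tau y x'.
Proof.
move=> y0 xx'; rewrite {1}/tau; case: ifPn => [xp|_]; last exact: tau_ge0.
have xp' : 0 < x' by apply: lt_le_trans xp xx'.
rewrite /tau xp'; apply: ler_wpM2l; first exact: ltW.
rewrite ler_expR ler_int; apply: le_ceil.
rewrite ler_ln ?posrE; [|apply: divr_gt0|apply: divr_gt0] => //.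
by rewrite ler_pM2r ?invr_gt0.
Qed.

Lemma tau_gap y x x' : 0 < y -> tau y x < tau y x' -> e * tau y x <= tau y x'.
Proof.
move=> y0; rewrite {1 3}/tau; case: ifPn => [xp|_]; last first.
  by rewrite mulr0 => _; apply: tau_ge0.
rewrite /tau; case: ifPn => [xp'|_]; last first.
  move=> h; exfalso; have : 0 < y * expR (Num.ceil (ln (x / y)))%:~R.
    by apply: mulr_gt0 => //; apply: expR_gt0.
  by rewrite ltNge (ltW h).
rewrite ltr_pM2l // ltr_expR ltr_int => hlt.
rewrite mulrCA -expRD; apply: ler_wpM2l; first exact: ltW.
rewrite ler_expR -[1]/(1%:~R) -intrD ler_int addrC.
by rewrite lezD1.
Qed.
End Thresh.
Arguments tau {R}.
Section Avg.
Variable R : realType.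
Local Notation e := (expR (1:R)).

Lemma avg_exists (n : nat) (a : nat -> R) :
  (forall k, (1 < k <= n)%N -> 0 <= a k) ->
  exists2 y, 0 < y &
    \sum_(2 <= k < n.+1) tau y (a k) <= (e - 1) * \sum_(2 <= k < n.+1) a k.
Proof.
move=> a0.
have eg := e_gt1 R.
have sa0 : 0 <= \sum_(2 <= k < n.+1) a k.
  by rewrite big_seq; apply: sumr_ge0 => k; rewrite mem_index_iota => /a0.
set r := index_iota 2 n.+1.
have hsum1 : forall y, \sum_(2 <= k < n.+1) tau y (a k) =
    \sum_(k <- [seq k <- r | 0 < a k]) tau y (a k).
  move=> y; rewrite big_filter [RHS]big_mkcond; apply: eq_bigr => k _.
  by rewrite /tau; case: ifP.
have hsum2 : \sum_(k <- [seq k <- r | 0 < a k]) a k <= \sum_(2 <= k < n.+1) a k.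
  rewrite big_filter big_mkcond /= ler_sum_nat // => k hk.
  by case: ifP => // _; apply: a0; lia.
set K := [seq k <- r | 0 < a k].
have Kpos : forall k, k \in K -> 0 < a k by move=> k; rewrite mem_filter => /andP[].
case: (eqVneq K [::]) => [K0|Kn0].
  exists 1 => //; rewrite hsum1 -/K K0 big_nil.
  by apply: mulr_ge0 => //; lra.
pose Aa := fun k => expR ((Num.floor (ln (a k)))%:~R) : R.
pose b := fun k => a k / Aa k.
have Aa0 : forall k, 0 < Aa k by move=> k; apply: expR_gt0.
have hab : forall k, a k = Aa k * b k.
  by move=> k; rewrite /b mulrC divfK // gt_eqF.
have hb1 : forall k, k \in K -> 1 <= b k.
  move=> k /Kpos ak; rewrite /b ler_pdivlMr // mul1r /Aa.
  rewrite -{2}(lnK ak) ?posrE // ler_expR; exact: floor_le.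
have hbe : forall k, k \in K -> b k < e.
  move=> k /Kpos ak; rewrite /b ltr_pdivrMr // /Aa -expRD.
  rewrite -{1}(lnK ak) ?posrE // ltr_expR addrC -[1]/(1%:~R) -intrD.
  exact: floorD1_gt.
pose leT := fun i j => b i <= b j.
have leT_tr : transitive leT by move=> x y z; apply: le_trans.
have leT_refl : reflexive leT by move=> x; apply: lexx.
have leT_tot : total leT by move=> x y; apply: le_total.
set l := sort leT K.
have hperm : perm_eq l K by rewrite perm_sort.
have lsorted : sorted leT l by apply: sort_sorted.
have memlK : forall k, k \in l -> k \in K by move=> k; rewrite mem_sort.
set N := size l.
have N0 : (0 < N)%N.
  by rewrite /N (perm_size hperm); case: (K) Kn0.
have nthK : forall s, (s < N)%N -> nth 0%N l s \in K.
  by move=> s sN; apply: memlK; apply: mem_nth.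
have bmono : forall s s', (s <= s')%N -> (s' < N)%N -> b (nth 0%N l s) <= b (nth 0%N l s').
  move=> s s' ss' s'N; apply: (sorted_leq_nth leT_tr leT_refl) => //.
    by rewrite inE; apply: leq_ltn_trans s'N.
pose p := fun s => if (s < N)%N then b (nth 0%N l s) else e * b (nth 0%N l 0).
pose A' := fun s => Aa (nth 0%N l s).
have p0 : 0 < p 0%N by rewrite /p N0; apply: lt_le_trans (hb1 _ (nthK _ N0)).
have pmon : forall s, (s < N)%N -> p s <= p s.+1.
  move=> s sN; rewrite /p sN; case: ifP => [sN'|_]; first exact: bmono.
  apply: le_trans (ltW (hbe _ (nthK _ sN))) _.
  rewrite -[X in X <= _]mulr1; apply: ler_wpM2l; first lra.
  exact: hb1 _ (nthK _ N0).
have pN : p N = e * p 0%N by rewrite /p ltnn N0.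
have A0 : forall s, 0 <= A' s by move=> s; apply: ltW; apply: Aa0.
have [s sN hs] := @avg_pure R N p A' N0 p0 pmon pN A0.
exists (p s); first by apply: lt_le_trans p0 _; rewrite /p N0 sN; apply: bmono.
have ps : p s = b (nth 0%N l s) by rewrite /p sN.
have y1 : 1 <= p s by rewrite ps; apply: hb1; apply: nthK.
rewrite hsum1 -/K. rewrite -(perm_big _ hperm) (big_nth 0%N) -/N.
apply: le_trans (_ : p s * (\sum_(0 <= k < N) A' k * (if (k <= s)%N then 1 else e)) <= _).
  rewrite mulr_sumr; apply: ler_sum_nat => k /andP[_ kN].
  have kK := nthK _ kN.
  have ak := Kpos _ kK.
  case: ifPn => ks.
    rewrite mulr1 /A' /Aa; apply: tau_min => //; first lra.
    rewrite {1}hab -/(Aa _) mulrC; apply: ler_wpM2r; first exact: ltW.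
    by rewrite ps; apply: bmono.
  have -> : p s * (A' k * e) = p s * expR ((Num.floor (ln (a (nth 0%N l k))) + 1)%:~R).
    by rewrite intrD expRD.
  apply: tau_min => //; first lra.
  rewrite intrD expRD -/(Aa _) {1}hab (_ : (1%:~R : R) = 1) //.
  rewrite [X in _ <= X]mulrCA ler_pM2l; last exact: Aa0.
  apply: le_trans (ltW (hbe _ kK)) _.
  by rewrite -[X in X <= _]mul1r; apply: ler_wpM2r; lra.
apply: le_trans hs _.
apply: ler_wpM2l; first lra.
apply: le_trans hsum2.
rewrite -(perm_big _ hperm) [X in _ <= X](big_nth 0%N) -/N.
rewrite le_eqVlt; apply/orP; left; apply/eqP; apply: eq_big_nat => k /andP[_ kN].
by rewrite /p kN /A' hab.
Qed.
End Avg.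
Section PathEx.
Variable R : realType.
Local Notation e := (expR (1:R)).

Lemma path_exists (n : nat) (a : nat -> R) : (1 <= n)%N ->
  (forall k, (1 < k <= n)%N -> 0 <= a k) ->
  (forall k l, (1 < k)%N -> (k <= l <= n)%N -> a k <= a l) ->
  exists P, [/\ path ltn 1%N P, last 1%N P = n &
    pcost n a 1%N P <= e * \sum_(2 <= k < n.+1) a k].
Proof.
move=> n1 a0 amon.
have eg := e_gt1 R.
have [y y0 hy] := @avg_exists R n a a0.
have hat : forall k, (1 < k <= n)%N -> a k <= tau y (a k).
  by move=> k hk; apply: tau_ge => //; apply: a0.
have hmon : forall k l, (1 < k)%N -> (k <= l <= n)%N -> tau y (a k) <= tau y (a l).
  by move=> k l hk hkl; apply: tau_mono => //; apply: amon.
have hgap : forall k l, (1 < k <= n)%N -> (1 < l <= n)%N -> tau y (a k) < tau y (a l) ->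
    e * tau y (a k) <= tau y (a l).
  by move=> k l _ _; apply: tau_gap.
have hi : (1 <= 1 <= n)%N by rewrite leqnn n1.
have hth : forall k, (1 < k <= n)%N -> e * 0 <= tau y (a k).
  by move=> k _; rewrite mulr0; apply: tau_ge0.
have [P [h1 h2 h3]] := @path_ind R n a (fun k => tau y (a k)) hat hmon hgap 1%N hi 0 (lexx 0) hth.
exists P; split => //.
apply: le_trans h3 _.
under eq_bigr do rewrite subr0.
apply: le_trans (_ : e / (e - 1) * ((e - 1) * \sum_(2 <= k < n.+1) a k) <= _).
  by apply: ler_wpM2l => //; apply: divr_ge0; lra.
rewrite mulrA divfK //; lra.
Qed.
End PathEx.
Local Close Scope ring_scope.
Section Graph.
Variables (V E : finType) (ends : E -> V * V) (len : E -> nat) (r : V) (s : seq E).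
Hypothesis hs : feasible ends r s.

Local Notation F j := (prefix_set s j).
Local Notation c j := #|rverts ends r (prefix_set s j)|.
Definition Ssum (j : nat) : nat := \sum_(e <- take j s) len e.

Lemma rverts_set0 : rverts ends r set0 = [set r].
Proof.
apply/setP => v; rewrite !inE; case: (v == r) => //=.
by apply/existsP => -[e]; rewrite inE.
Qed.

Lemma F0 : F 0 = set0.
Proof. by apply/setP => e; rewrite !inE take0. Qed.

Lemma c_eq j : (j <= size s)%N -> c j = (#|F j| + 1)%N.
Proof.
case: j => [|j] hj.
  by rewrite F0 rverts_set0 cards1 cards0.
by case: hs => [[_ /(_ j.+1)]] /(_ _) [] //; rewrite hj.
Qed.

Lemma F_succ j : (#|F j.+1| <= #|F j| + 1)%N.
Proof.
rewrite /prefix_set -addn1 takeD.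
case: (drop j s) => [|x l] /=.
  by rewrite cats0 leq_addr.
rewrite take0.
have -> : [set e in take j s ++ [:: x]] = x |: [set e in take j s].
  by apply/setP => e; rewrite !inE mem_cat inE orbC.
rewrite cardsU1 addnC leq_add2l; by case: (x \notin _).
Qed.

Lemma mem_take_mono j j' e : (j <= j')%N -> e \in take j s -> e \in take j' s.
Proof. by move=> jj'; rewrite -(take_takel s jj') => /mem_take. Qed.

Lemma F_mono j j' : (j <= j')%N -> F j \subset F j'.
Proof.
move=> jj'; apply/subsetP => e; rewrite !inE; exact: mem_take_mono.
Qed.

Lemma rverts_mono (A B : {set E}) : A \subset B -> rverts ends r A \subset rverts ends r B.
Proof.
move=> AB; apply/subsetP => v; rewrite !inE => /orP[->//|/existsP[e /andP[eA ev]]].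
by apply/orP; right; apply/existsP; exists e; rewrite ev (subsetP AB).
Qed.

Lemma c_mono j j' : (j <= j')%N -> (c j <= c j')%N.
Proof. by move=> jj'; apply: subset_leq_card; apply: rverts_mono; apply: F_mono. Qed.

Lemma c_succ j : (j < size s)%N -> (c j.+1 <= c j + 1)%N.
Proof.
move=> js; rewrite c_eq // c_eq; last exact: ltnW.
by rewrite leq_add2r F_succ.
Qed.

Lemma c_full : c (size s) = #|V|.
Proof.
suff -> : rverts ends r (F (size s)) = setT by rewrite cardsT.
apply/setP => v; rewrite !inE.
case: (eqVneq v r) => //= vr.
case: hs => _ /(_ v vr) /hasP[e es ev].
by apply/existsP; exists e; rewrite ev andbT inE take_size.
Qed.

Lemma S_mono j j' : (j <= j')%N -> (Ssum j <= Ssum j')%N.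
Proof.
move=> jj'; rewrite /Ssum -(subnKC jj') takeD big_cat /=; exact: leq_addr.
Qed.

Lemma lenT_le_seq (l : seq E) : (lenT len [set e in l] <= \sum_(e <- l) len e)%N.
Proof.
elim: l => [|x l IH]; first by rewrite /lenT big_nil (_ : [set e in [::]] = set0) ?big_set0 //; apply/setP => e; rewrite !inE.
have -> : [set e in x :: l] = x |: [set e in l] by apply/setP => e; rewrite !inE.
rewrite /lenT big_cons; case: (boolP (x \in [set e in l])) => hx.
  by rewrite (setUidPr _) ?sub1set //; apply: leq_trans IH (leq_addl _ _).
by rewrite big_setU1 //= leq_add2l.
Qed.

Lemma lenT_le j : (lenT len (F j) <= Ssum j)%N.
Proof. exact: lenT_le_seq. Qed.

Lemma latencyE v : v != r -> latency ends len r s v = Ssum (find (inc ends ^~ v) s).+1.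
Proof. by move=> vr; rewrite /latency (negbTE vr). Qed.

Definition jk (k : nat) : nat := find (fun j => k <= c j)%N (iota 0 (size s).+1).

Section K.
Variable k : nat.
Hypothesis hk : (1 <= k <= #|V|)%N.

Lemma jk_has : has (fun j => k <= c j)%N (iota 0 (size s).+1).
Proof.
apply/hasP; exists (size s); first by rewrite mem_iota add0n ltnSn.
by rewrite c_full; case/andP: hk.
Qed.

Lemma jk_le : (jk k <= size s)%N.
Proof. by have := jk_has; rewrite has_find size_iota. Qed.

Lemma jk_ge : (k <= c (jk k))%N.
Proof.
have := nth_find 0%N jk_has; rewrite nth_iota //; last by rewrite ltnS jk_le.
Qed.

Lemma jk_min j : (j < jk k)%N -> (c j < k)%N.
Proof.
move=> hj; have := before_find 0%N hj; rewrite nth_iota; last first.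
  by apply: leq_trans hj _; apply: leqW; apply: jk_le.
by rewrite add0n => /negbT; rewrite -ltnNge.
Qed.

Lemma jk_c : c (jk k) = k.
Proof.
apply/eqP; rewrite eqn_leq jk_ge andbT.
case E0: (jk k) => [|j].
  by rewrite c_eq // F0 cards0; case/andP: hk.
have := jk_min j; rewrite E0 ltnSn => /(_ isT) hj.
apply: (@leq_trans (c j + 1)); first by apply: c_succ; rewrite -E0 jk_le.
by rewrite addn1.
Qed.
End K.

Lemma jk_mono k l : (1 <= k)%N -> (k <= l <= #|V|)%N -> (jk k <= jk l)%N.
Proof.
move=> k1 /andP[kl ln]; rewrite leqNgt; apply/negP => h.
have hk : (1 <= k <= #|V|)%N by rewrite k1 (leq_trans kl ln).
have hl : (1 <= l <= #|V|)%N by rewrite (leq_trans k1 kl) ln.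
have := @jk_min k hk _ h; rewrite (@jk_c l hl).
by rewrite ltnNge kl.
Qed.


Lemma jk_pos {k} : (2 <= k <= #|V|)%N -> (0 < jk k)%N.
Proof.
move=> /andP[k2 kn]; have hk : (1 <= k <= #|V|)%N by rewrite kn andbT ltnW.
rewrite lt0n; apply/negP => /eqP h0.
have := @jk_c k hk; rewrite h0 c_eq // F0 cards0 => hk1; rewrite -hk1 in k2; by [].
Qed.

Lemma exists_v {k} : (2 <= k <= #|V|)%N ->
  exists v, (v != r) && (find (inc ends ^~ v) s == (jk k).-1).
Proof.
move=> hk2; have hk : (1 <= k <= #|V|)%N by case/andP: hk2 => k2 ->; rewrite ltnW.
have jpos := jk_pos hk2.
have jle := @jk_le k hk.
have jc := @jk_c k hk.
move: jpos jle jc (@jk_min k hk); case: (jk k) => [//|j'] _ jle jc jmin.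
have cj' : (c j' < k)%N by apply: jmin; rewrite ltnSn.
have : ~~ (rverts ends r (F j'.+1) \subset rverts ends r (F j')).
  apply/negP => /subset_leq_card; rewrite jc leqNgt cj' //.
case/subsetPn => v vin vout.
have vr : v != r by apply: contraNneq vout => ->; rewrite !inE eqxx.
move: vin; rewrite !inE (negbTE vr) /= => /existsP[e /andP[]]; rewrite inE => ein ev.
have hasj : has (inc ends ^~ v) (take j'.+1 s) by apply/hasP; exists e.
have nhas : ~~ has (inc ends ^~ v) (take j' s).
  apply/negP => /hasP[e' e'in e'v]; move: vout; rewrite !inE (negbTE vr) /=.
  by move/existsP; apply; exists e'; rewrite inE e'in.
rewrite has_take_leq // in hasj; rewrite has_take_leq in nhas; last exact: ltnW.
exists v; rewrite vr /=; apply/eqP => /=; lia.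
Qed.

Definition psi k := odflt r [pick v | (v != r) && (find (inc ends ^~ v) s == (jk k).-1)].

Lemma psi_spec {k} : (2 <= k <= #|V|)%N ->
  psi k != r /\ find (inc ends ^~ (psi k)) s = (jk k).-1.
Proof.
move=> hk; rewrite /psi; case: pickP => [v /andP[vr /eqP ->]//|none].
by have [v hv] := exists_v hk; rewrite none in hv.
Qed.

Lemma psi_lat {k} : (2 <= k <= #|V|)%N -> latency ends len r s (psi k) = Ssum (jk k).
Proof.
move=> hk; have [vr hf] := psi_spec hk.
by rewrite latencyE // hf prednK // jk_pos.
Qed.

Lemma psi_inj {k l} : (2 <= k <= #|V|)%N -> (2 <= l <= #|V|)%N -> psi k = psi l -> k = l.
Proof.
move=> hk hl e1.
have [_ hfk] := psi_spec hk; have [_ hfl] := psi_spec hl.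
have : (jk k).-1 = (jk l).-1 by rewrite -hfk -hfl e1.
move=> h; have : jk k = jk l.
  by rewrite -(prednK (jk_pos hk)) -(prednK (jk_pos hl)) h.
have hk1 : (1 <= k <= #|V|)%N by case/andP: hk => k2 ->; rewrite ltnW.
have hl1 : (1 <= l <= #|V|)%N by case/andP: hl => l2 ->; rewrite ltnW.
by move=> h2; rewrite -(@jk_c k hk1) -(@jk_c l hl1) h2.
Qed.

Lemma sum_le_total : (\sum_(2 <= k < #|V|.+1) Ssum (jk k) <= total_latency ends len r s)%N.
Proof.
rewrite big_seq (eq_bigr (fun k => latency ends len r s (psi k))); last first.
  by move=> k; rewrite mem_index_iota => hk; rewrite psi_lat.
rewrite -big_seq -(big_map psi xpredT (latency ends len r s)).
rewrite big_uniq; last first.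
  rewrite map_inj_in_uniq ?iota_uniq // => k l; rewrite !mem_index_iota => hk hl.
  by apply: psi_inj; lia.
rewrite /total_latency big_mkcond /=; apply: leq_sum => v _; by case: ifP.
Qed.

Lemma graph_main (T : nat -> {set E}) : kmst_2approx ends len r T ->
  forall k, (1 <= k <= #|V|)%N -> (lenT len (T k) <= 2 * Ssum (jk k))%N.
Proof.
move=> [T1 hT] k hk.
have := @jk_c k hk; have := @jk_le k hk.
case E0 : (jk k) => [|j] jle jc.
  move: jc; rewrite c_eq // F0 cards0 /= => <-.
  by rewrite T1 /lenT big_set0.
have [_ _ hb] := hT k hk.
apply: leq_trans (hb (F j.+1) _ jc) _.
  by case: hs => [[_ /(_ j.+1)]] /(_ _) [] //; rewrite jle.
by rewrite leq_mul2l lenT_le orbT.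
Qed.
End Graph.
Local Open Scope ring_scope.
Lemma path_bounds (x : nat) (P : seq nat) : path ltn x P ->
  (x <= last x P)%N /\ forall y, y \in P -> (x < y <= last x P)%N.
Proof.
elim: P x => [|z P IH] x /=; first by [].
move=> /andP[xz pz]; have [zl hy] := IH z pz.
split; first by apply: leq_trans (ltnW xz) zl.
move=> y; rewrite inE => /orP[/eqP->|yP]; first by rewrite xz zl.
by have := hy y yP => /andP[zy ->]; rewrite (ltn_trans xz zy).
Qed.

Lemma zip_mem2 (x : nat) (P : seq nat) ij : ij \in zip (x :: P) P -> ij.2 \in P.
Proof.
elim: P x => [|z P IH] x //=.
rewrite inE => /orP[/eqP->|h]; first by rewrite inE eqxx.
by rewrite inE (IH z h) orbT.
Qed.

Theorem lemma3 (R : realType) (V E : finType) (ends : E -> V * V) (len : E -> nat)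
  (r : V) (T : nat -> {set E}) :
  simple_graph ends -> connected_graph ends r ->
  (forall e, (0 < len e)%N) ->
  kmst_2approx ends len r T ->
  exists P : seq nat,
    H_path #|V| P /\
    forall s : seq E, feasible ends r s ->
      (H_cost len #|V| T P)%:R <= 2 * expR (1 : R) * (total_latency ends len r s)%:R.
Proof.
move=> _ _ _ hT.
set n := #|V|.
have n1 : (1 <= n)%N by apply/card_gt0P; exists r.
pose Q := fun c => `[< exists P, H_path n P /\ H_cost len n T P = c >].
have exQ : exists c, Q c.
  exists (H_cost len n T (if n == 1%N then [::] else [:: n])).
  apply/asboolP; eexists; split; last reflexivity.
  case: eqP => [->//|/eqP nn1]; rewrite /H_path /= eqxx andbT andbT.
  by rewrite ltn_neqAle eq_sym nn1 n1.
case: (ex_minnP exQ) => m /asboolP[Ps [hPs hm]] mmin.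
exists Ps; split => // s hs.
pose a := fun k => (Ssum E len s (jk V E ends r s k))%:R : R.
have a0 : forall k, (1 < k <= n)%N -> 0 <= a k by move=> k _; apply: ler0n.
have amon : forall k l, (1 < k)%N -> (k <= l <= n)%N -> a k <= a l.
  move=> k l k1 kl; rewrite ler_nat; apply: S_mono.
  exact: (@jk_mono _ _ _ _ _ hs _ _ (ltnW k1) kl).
have [P [pP lP cP]] := @path_exists R n a n1 a0 amon.
have HP : H_path n P by rewrite /H_path pP lP eqxx.
have hle : (m <= H_cost len n T P)%N by apply: mmin; apply/asboolP; exists P.
apply: le_trans (_ : (H_cost len n T P)%:R <= _); first by rewrite hm ler_nat.
have [_ hb] := @path_bounds _ _ pP; rewrite lP in hb.
apply: le_trans (_ : 2 * pcost n a 1%N P <= _).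
  rewrite /H_cost /pcost natr_sum mulr_sumr big_seq [X in _ <= X]big_seq.
  apply: ler_sum => ij hij.
  have := hb _ (@zip_mem2 _ _ _ hij) => /andP[h1 h2].
  rewrite natrM mulrCA; apply: ler_wpM2l => //.
  rewrite /a -natrM ler_nat; apply: (@graph_main _ _ _ _ _ _ hs _ hT).
  by rewrite h2 ltnW.
rewrite -mulrA; apply: ler_wpM2l => //.
apply: le_trans cP _.
apply: ler_wpM2l; first exact: expR_ge0.
rewrite /a -natr_sum ler_nat; exact: (@sum_le_total _ _ _ _ _ _ hs).
Qed.
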